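(* Every topological space $X$ is $\Gamma$-embedded in its cone $\mathrm{Cone}(X)=([0,1]\times X)/(\{0\}\times X)$ (quotient topology); namely via the embedding $c\colon X\to\mathrm{Cone}(X)$, $x\mapsto 1x$, and the semigroup homomorphism $\sigma\colon\Gamma(X)\to\Gamma(\mathrm{Cone}(X))$ sending $f$ to $\sigma(f)\colon \eta((0,1]\times\mathrm{dom}(f))\to\eta((0,1]\times\mathrm{im}(f))$, $tx\mapsto tf(x)$.
   Context: $\eta\colon[0,1]\times X\to\mathrm{Cone}(X)$ is the quotient map and $tx=\eta(t,x)$. For a topological space $X$, $\Gamma(X)$ is the inverse monoid of homeomorphisms between open subsets of $X$ (including the empty map), with product $\psi\circ\phi\colon \phi^{-1}(\mathrm{dom}(\psi)\cap\mathrm{im}(\phi))\to\psi(\mathrm{dom}(\psi)\cap\mathrm{im}(\phi))$. Let $\Gamma(X)*X=\{(f,x)\in\Gamma(X)\times X: x\in\mathrm{dom}(f)\}$. $X$ is $\Gamma$-embedded in a space $Z$ if there exist a semigroup homomorphism $\sigma\colon\Gamma(X)\to\Gamma(Z)$ and a topological embedding $c\colon X\to Z$ such that for every $(f,x)\in\Gamma(X)*X$ one has $c(x)\in\mathrm{dom}(\sigma(f))$ and $\sigma(f)(c(x))=c(f(x))$. *)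

(* Defs.v *)
From HB Require Import structures.
From mathcomp Require Import all_boot all_order all_algebra.
From mathcomp Require Import all_classical all_reals all_analysis.
Set Implicit Arguments. Unset Strict Implicit. Unset Printing Implicit Defensive.
Import Order.TTheory GRing.Theory Num.Theory.
Import numFieldNormedType.Exports.
Local Open Scope classical_set_scope.
Local Open Scope ring_scope.

(* The product of Gamma(X) is composition of
   partial maps: (psi o phi)(x) = psi(phi(x)), defined exactly on
   phi^{-1}(dom psi /\ im phi). *)

Definition pdom {X : Type} (f : X -> option X) : set X := [set x | f x <> None].
Definition pfun {X : Type} (f : X -> option X) : X -> X := fun x => odflt x (f x).
Definition pcomp {X : Type} (g f : X -> option X) : X -> option X :=
  fun x => obind g (f x).

Definition is_phomeo {X : topologicalType} (f : X -> option X) : Prop :=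
  exists g : X -> option X,
    [/\ open (pdom f), open (pdom g),
        (forall x y, f x = Some y <-> g y = Some x),
        {within pdom f, continuous (pfun f)} &
        {within pdom g, continuous (pfun g)}].

Definition top_embedding {X Z : topologicalType} (c : X -> Z) : Prop :=
  [/\ injective c, continuous c &
      forall U : set X, open U -> exists V : set Z, open V /\ c @` U = V `&` range c].

(* X is Gamma-embedded in Z via sigma and c.  sigma is given as a map on
   partial maps, required to send Gamma(X) into Gamma(Z) and to be
   multiplicative on Gamma(X); i.e. its restriction is a semigroup
   homomorphism Gamma(X) -> Gamma(Z). *)
Definition Gamma_embedding_via {X Z : topologicalType}
  (sigma : (X -> option X) -> (Z -> option Z)) (c : X -> Z) : Prop :=
  [/\ top_embedding c,
      (forall f, is_phomeo f -> is_phomeo (sigma f)),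
      (forall f g, is_phomeo f -> is_phomeo g ->
         sigma (pcomp g f) = pcomp (sigma g) (sigma f)) &
      (forall f x y, is_phomeo f -> f x = Some y -> sigma f (c x) = Some (c y))].

Definition Gamma_embedded (X Z : topologicalType) : Prop :=
  exists sigma c, @Gamma_embedding_via X Z sigma c.

Section Cone.
Variables (R : realType) (X : topologicalType).

Local Notation unitI := (set_type (`[0, 1] : set R)).

(* Carrier of Cone(X) = ([0,1] x X)/({0} x X): the apex (None), or a class
   t x with 0 < t <= 1 (which is a singleton class). *)
Definition cone_car : Type := option (set_type (`]0, 1] : set R) * X).

Definition cone_eta (p : unitI * X) : cone_car :=
  omap (fun s => (s, p.2)) (insub (set_val p.1) : option (set_type (`]0, 1] : set R))).

Definition cone : Type := cone_car.
HB.instance Definition _ := Choice.on cone.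

Definition cone_open (U : set cone) : Prop := open (cone_eta @^-1` U).

Lemma cone_openT : cone_open setT.
Proof. by rewrite /cone_open preimage_setT; exact: openT. Qed.

Lemma cone_openI : setI_closed cone_open.
Proof. by move=> A B oA oB; rewrite /cone_open preimage_setI; exact: openI. Qed.

Lemma cone_open_bigU (I : Type) (f : I -> set cone) :
  (forall i, cone_open (f i)) -> cone_open (\bigcup_i f i).
Proof.
move=> H; rewrite /cone_open preimage_bigcup.
by apply: bigcup_open => i _; exact: H.
Qed.

HB.instance Definition _ :=
  isOpenTopological.Build cone cone_openT cone_openI cone_open_bigU.

Lemma one_in_unitI : (1 : R) \in (`[0, 1]%classic : set R).
Proof. by apply/mem_set; rewrite /= in_itv /= ler01 lexx. Qed.

Definition oneI : unitI := exist _ 1 one_in_unitI.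

Definition cone_c (x : X) : cone := cone_eta (oneI, x).

Definition cone_sigma (f : X -> option X) : cone -> option cone :=
  fun z => match z with
           | None => None
           | Some (s, x) => omap (fun y => Some (s, y) : cone) (f x)
           end.

End Cone.

(* Main.v *)
Require Import Defs.
From mathcomp Require Import all_boot all_order all_algebra.
From mathcomp Require Import all_classical all_reals all_analysis.
Set Implicit Arguments. Unset Strict Implicit. Unset Printing Implicit Defensive.
Import Order.TTheory GRing.Theory Num.Theory.
Import numFieldNormedType.Exports.
Local Open Scope classical_set_scope.
Local Open Scope ring_scope.

Section S.
Variables (R : realType) (X : topologicalType).
Local Notation unitI := (set_type (`[0, 1] : set R)).
Local Notation C := (cone R X).
Local Notation eta := (@cone_eta R X).

Definition cmap (phi : X -> X) : C -> C := fun z =>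
  match z with None => None | Some (s, x) => Some (s, phi x) end.
Definition Cs (D : set X) : set C := fun z =>
  match z with None => False | Some (_, x) => D x end.

Lemma coneopenE (U : set C) : open U = open (eta @^-1` U).
Proof. by []. Qed.

Lemma eta_Cs D : eta @^-1` Cs D = [set p | 0 < set_val p.1 /\ D p.2].
Proof.
apply/funext => -[t x]; rewrite /cone_eta /=; apply/propext.
case: insubP => [s Hs _|Hn] /=.
  move: Hs => /set_mem; rewrite /= in_itv /= => /andP[H0 _]; tauto.
split => // -[H0 _]; move: Hn => /negP; apply; apply/mem_set; rewrite /= in_itv /= H0 /=.
by case: t {H0} => t /= Ht; move/set_mem: (Ht); rewrite /= in_itv /= => /andP[_ ->].
Qed.

Lemma open_Cs D : open D -> open (Cs D).
Proof.
move=> oD; rewrite coneopenE eta_Cs.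
apply: openI.
  have cf : continuous (fun p : unitI * X => set_val p.1).
    move=> p; apply: (@continuous_comp _ _ _ fst set_val).
      exact: cvg_fst.
    exact: initial_continuous.
  exact: (proj1 (continuousP _) cf _ (@open_gt R 0)).
have cs : continuous (fun p : unitI * X => p.2) by move=> p; exact: cvg_snd.
exact: (proj1 (continuousP _) cs _ oD).
Qed.

Lemma eta_G phi (p : unitI * X) : eta (p.1, phi p.2) = cmap phi (eta p).
Proof. by case: p => t x; rewrite /cone_eta /=; case: insub. Qed.

Lemma cmap_cont phi D : open D -> {in D, continuous phi} ->
  {in Cs D, continuous (cmap phi)}.
Proof.
move=> oD cphi; apply/(continuous_inP _ (open_Cs oD)) => U oU.
rewrite coneopenE preimage_setI.
have -> : eta @^-1` (cmap phi @^-1` U) =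
   (fun p : unitI * X => (p.1, phi p.2)) @^-1` (eta @^-1` U).
  by apply/funext => p /=; rewrite eta_G.
have oO : open (eta @^-1` Cs D) by exact: (open_Cs oD).
pose G := (fun p : unitI * X => (p.1, phi p.2)).
have oU' : open (eta @^-1` U) by exact: oU.
suff HG : {in eta @^-1` Cs D, continuous G} by exact: (proj1 (continuous_inP G oO) HG _ oU').
move=> p; rewrite inE eta_Cs => -[_ Dp].
rewrite /G /continuous_at.
apply: (@cvg_pair _ _ _ _ (nbhs p.1) (nbhs (phi p.2))); first exact: cvg_fst.
apply: (@continuous_comp _ _ _ snd phi); first exact: cvg_snd.
by apply: cphi; rewrite inE.
Qed.

Lemma pfun_sigma f : pfun (@cone_sigma R X f) = cmap (pfun f).
Proof. by apply/funext => -[[s x]|] //=; rewrite /pfun /=; case: (f x). Qed.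

Lemma pdom_sigma f : pdom (@cone_sigma R X f) = Cs (pdom f).
Proof.
apply/funext => -[[s x]|]; rewrite /pdom /=; apply/propext => //.
by case: (f x).
Qed.

Lemma sigma_rel f g z w : (forall x y, f x = Some y -> g y = Some x) ->
  @cone_sigma R X f z = Some w -> @cone_sigma R X g w = Some z.
Proof.
move=> H; case: z => [[s x]|] //=.
case E: (f x) => [y|] //= [<-] /=.
by rewrite (H _ _ E).
Qed.

Lemma cE : exists s, forall x, @cone_c R X x = Some (s, x).
Proof.
rewrite /cone_c /cone_eta /=.
case: insubP => [s _ _|Hn]; first by exists s.
by exfalso; move/negP: Hn; apply; apply/mem_set; rewrite /= in_itv /= ltr01 lexx.
Qed.

End S.

Theorem proposition2p7 (R : realType) (X : topologicalType) :
  @Gamma_embedding_via X (cone R X) (@cone_sigma R X) (@cone_c R X).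
Proof.
have [s cx] := @cE R X.
split.
- split.
  + by move=> x y; rewrite !cx => -[].
  + have -> : @cone_c R X = @cone_eta R X \o (fun x => (oneI R, x)) by [].
    have ce : continuous (@cone_eta R X : _ -> cone R X) by apply/continuousP.
    move=> x; apply: (continuous_comp _ (ce _)).
    by apply: (@cvg_pair _ _ _ _ (nbhs (oneI R)) (nbhs x)); [exact: cvg_cst|exact: cvg_id].
  + move=> U oU; exists (Cs U); split; first exact: open_Cs.
    apply/seteqP; split => z.
      by case=> x Ux <-; rewrite cx; split => //; exists x.
    case=> Uz [x _ xz]; subst z; move: Uz; rewrite cx /= => Ux.
    by exists x.
- move=> f [g [oF oG fg cf cg]]; exists (@cone_sigma R X g); split.
  + by rewrite pdom_sigma; exact: open_Cs.
  + by rewrite pdom_sigma; exact: open_Cs.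
  + move=> z w; split; apply: sigma_rel => x y; by move/fg.
  + rewrite pdom_sigma pfun_sigma continuous_open_subspace; last exact: open_Cs.
    apply: cmap_cont => //; by rewrite -continuous_open_subspace.
  + rewrite pdom_sigma pfun_sigma continuous_open_subspace; last exact: open_Cs.
    apply: cmap_cont => //; by rewrite -continuous_open_subspace.
- move=> f g _ _; apply/funext => -[[t x]|] //=.
  by rewrite /Defs.pcomp /=; case: (f x).
- by move=> f x y _ E; rewrite (cx x) (cx y); rewrite /cone_sigma E.
Qed.
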